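(* For any $\eta>0$ and $\beta>0$, the expected regret of Skipper$(\beta,\mathrm{DEW}(\eta,\beta))$ (Skipper with threshold $\beta$ wrapping DEW run with learning rate $\eta$ and delay bound $d_{\max}=\beta$) against an oblivious adversary satisfies $$\bar{\mathcal R}_T\le |S_\beta|+\max\left\{\frac{\ln K}{\eta},\,4e\beta\ln K\right\}+\eta\left(\frac{KTe}{2}+D_\beta\right).$$
   Context: Setting: fix integers $K\ge 2$, $T\ge 1$, and write $[K]=\{1,\dots,K\}$. An oblivious adversary fixes in advance losses $\ell_t^a\in[0,1]$ for $t=1,2,\dots$, $a\in[K]$, and nonnegative integer delays $d_1,d_2,\dots$. In each round $t$ the learner picks (possibly at random) an action $A_t\in[K]$ and suffers loss $\ell_t^{A_t}$; at the end of round $t$ (after $A_t$ has been chosen) it observes the pairs $(s,\ell_s^{A_s})$ for all $s\le t$ with $s+d_s=t$. The expected regret is $\bar{\mathcal R}_T=\mathbb E\big[\sum_{t=1}^T\ell_t^{A_t}\big]-\min_{a\in[K]}\sum_{t=1}^T\ell_t^a$, the expectation being over the learner's randomization. Algorithm DEW (delayed exponential weights) with inputs $\eta>0$ and $d_{\max}$: set $\eta'=\min\{\eta,(4e\,d_{\max})^{-1}\}$ and $w_0^a=1$ for all $a$. For $t=1,2,\dots$: let $p_t^a=w_{t-1}^a/\sum_b w_{t-1}^b$; draw $A_t\sim p_t$ and play it; at the end of round $t$, for every received pair $(s,\ell_s^{A_s})$ form the estimates $\hat\ell_s^a=\ell_s^a\mathbb 1(a=A_s)/p_s^a$ for all $a$;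 update $w_t^a=w_{t-1}^a\exp\big(-\eta'\sum_{s}\hat\ell_s^a\big)$, the sum over pairs received at the end of round $t$. Skipper$(\beta,\mathcal A)$ with threshold $\beta>0$ and base algorithm $\mathcal A$: in every round $t$ it plays the action $A_t$ proposed by $\mathcal A$, and at the end of round $t$ it passes to $\mathcal A$ exactly those observed pairs $(s,\ell_s^{A_s})$ with $s+d_s=t$ and $d_s<\beta$. $S_\beta=\{t\in[T]: d_t\ge\beta\}$ and $D_\beta=\sum_{t\in[T]\setminus S_\beta}d_t$. *)

(* Defs.v *)
From Stdlib Require Import Reals List Arith.
Open Scope R_scope.

Fixpoint sumR (n : nat) (f : nat -> R) : R :=
  match n with
  | O => 0
  | S m => sumR m f + f m
  end.

Fixpoint minR (n : nat) (f : nat -> R) : R :=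
  match n with
  | O => f O
  | S m => Rmin (minR m f) (f (S m))
  end.

(* Actions are 0,...,K-1 (the paper's [K] shifted by one); rounds are 1,2,...
   loss t a = l_t^a, d t = d_t.
   A record r : list (nat * R) stores, for rounds s = 1..length r, the pair
   (A_s, p_s^{A_s}) -- exactly the information needed for the importance
   weighted estimates \hat l_s^a = l_s^a 1(a = A_s) / p_s^a. *)

(* learning rate actually used by DEW(eta, d_max) *)
Definition eta' (eta dmax : R) : R := Rmin eta (/ (4 * exp 1 * dmax)).

(* Cumulative estimated loss of action a fed to DEW by Skipper(beta, .)
   up to the end of round m = length r: sum over s <= m with s + d_s <= m
   (observed by the end of round m) and d_s < beta (not skipped). *)
Definition cum_est (loss : nat -> nat -> R) (d : nat -> nat) (beta : R)
  (r : list (nat * R)) (a : nat) : R :=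
  sumR (length r) (fun i =>
    let s := S i in
    let '(As, ps) := nth i r (O, 1) in
    if ((s + d s <=? length r)%nat && (As =? a)%nat)%bool then
      if Rlt_dec (INR (d s)) beta then loss s a / ps else 0
    else 0).

(* DEW weights w_{m}^a after m = length r rounds, and sampling distribution
   p_{m+1}^a, for Skipper(beta, DEW(eta, beta)). *)
Definition weight (loss : nat -> nat -> R) (d : nat -> nat) (eta beta : R)
  (r : list (nat * R)) (a : nat) : R :=
  exp (- eta' eta beta * cum_est loss d beta r a).

Definition prob (K : nat) (loss : nat -> nat -> R) (d : nat -> nat) (eta beta : R)
  (r : list (nat * R)) (a : nat) : R :=
  weight loss d eta beta r a / sumR K (fun b => weight loss d eta beta r b).

(* Expected loss over the next n rounds, given the record r of the
   rounds 1..length r already played (expectation over A_t ~ p_t). *)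
Fixpoint exp_loss (K : nat) (loss : nat -> nat -> R) (d : nat -> nat)
  (eta beta : R) (n : nat) (r : list (nat * R)) : R :=
  match n with
  | O => 0
  | S n' =>
      sumR K (fun a =>
        let pa := prob K loss d eta beta r a in
        pa * (loss (S (length r)) a
              + exp_loss K loss d eta beta n' (r ++ (a, pa) :: nil)))
  end.

Definition skipper_dew_regret (K T : nat) (loss : nat -> nat -> R)
  (d : nat -> nat) (eta beta : R) : R :=
  exp_loss K loss d eta beta T nil
  - minR (K - 1) (fun a => sumR T (fun i => loss (S i) a)).

Definition card_S (T : nat) (d : nat -> nat) (beta : R) : R :=
  sumR T (fun i => if Rle_dec beta (INR (d (S i))) then 1 else 0).

Definition D_beta (T : nat) (d : nat -> nat) (beta : R) : R :=
  sumR T (fun i => if Rlt_dec (INR (d (S i))) beta then INR (d (S i)) else 0).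

(* Main.v *)
Require Import Defs.
From Stdlib Require Import Reals.
From Stdlib Require Import Lra Lia List Arith Bool.
Open Scope R_scope.

Lemma sumR_ext n f g : (forall i, (i < n)%nat -> f i = g i) -> sumR n f = sumR n g.
Proof. induction n; intros H; simpl; auto. rewrite IHn; [rewrite H|]; auto; intros; apply H; lia. Qed.

Lemma sumR_plus n f g : sumR n (fun i => f i + g i) = sumR n f + sumR n g.
Proof. induction n; simpl; [lra|]. rewrite IHn; lra. Qed.

Lemma sumR_scal n c f : sumR n (fun i => c * f i) = c * sumR n f.
Proof. induction n; simpl; [lra|]. rewrite IHn; lra. Qed.

Lemma sumR_le n f g : (forall i, (i < n)%nat -> f i <= g i) -> sumR n f <= sumR n g.
Proof. induction n; intros H; simpl; [lra|]. apply Rplus_le_compat; [apply IHn; intros; apply H; lia| apply H; lia]. Qed.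

Lemma sumR_nonneg n f : (forall i, (i < n)%nat -> 0 <= f i) -> 0 <= sumR n f.
Proof. intros H. replace 0 with (sumR n (fun _ => 0)). apply sumR_le; auto.
  clear H; induction n; simpl; auto; rewrite IHn; lra. Qed.

Lemma sumR_const n c : sumR n (fun _ => c) = INR n * c.
Proof. induction n; simpl sumR; [simpl; lra|]. rewrite IHn, S_INR; lra. Qed.

Lemma sumR_swap n m (f : nat -> nat -> R) :
  sumR n (fun i => sumR m (fun j => f i j)) = sumR m (fun j => sumR n (fun i => f i j)).
Proof. induction n; simpl.
  - rewrite sumR_const; simpl; lra.
  - rewrite IHn, <- sumR_plus. reflexivity. Qed.

Lemma sumR_shift n f : sumR (S n) f = f O + sumR n (fun i => f (S i)).
Proof. induction n; simpl in *; [lra|]. rewrite IHn; lra. Qed.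

Lemma sumR_add n k f : sumR (n + k) f = sumR n f + sumR k (fun i => f (n + i)%nat).
Proof. induction k; simpl. rewrite Nat.add_0_r; lra. rewrite Nat.add_succ_r; simpl. rewrite IHk. simpl; lra. Qed.

Lemma sumR_delta n i c (g : nat -> R) :
  sumR n (fun u => if (c =? i + u)%nat then g (i + u)%nat else 0)
  = if ((i <=? c) && (c <? i + n))%nat%bool then g c else 0.
Proof. induction n; simpl.
  - destruct (c <? i + 0)%nat eqn:E2; [|rewrite andb_false_r; auto].
    apply Nat.ltb_lt in E2. replace (i <=? c)%nat with false; auto.
    symmetry; apply Nat.leb_gt; lia.
  - rewrite IHn. destruct (c =? i + n)%nat eqn:E.
    + apply Nat.eqb_eq in E; subst.
      replace ((i <=? i + n) && (i + n <? i + n))%nat%bool with false.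
      replace ((i <=? i + n) && (i + n <? i + S n))%nat%bool with true. lra.
      symmetry; apply andb_true_iff; split; [apply Nat.leb_le|apply Nat.ltb_lt]; lia.
      symmetry; apply andb_false_iff; right; apply Nat.ltb_ge; lia.
    + apply Nat.eqb_neq in E.
      destruct (i <=? c)%nat eqn:E1; simpl; [|lra].
      destruct (c <? i + n)%nat eqn:E2; destruct (c <? i + S n)%nat eqn:E3; try lra.
      apply Nat.ltb_lt in E2; apply Nat.ltb_ge in E3; lia.
      apply Nat.leb_le in E1; apply Nat.ltb_ge in E2; apply Nat.ltb_lt in E3; lia.
Qed.

Lemma sumR_single n a (g : nat -> R) : (a < n)%nat ->
  sumR n (fun b => if (a =? b)%nat then g b else 0) = g a.
Proof. intros H. pose proof (sumR_delta n 0 a g) as E. simpl in E. rewrite E.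
  replace ((a <? n))%nat with true; auto. symmetry; apply Nat.ltb_lt; auto. Qed.

Lemma sumR_tele n f : sumR n (fun m => f (S m) - f m) = f n - f O.
Proof. induction n; simpl; [lra|]. rewrite IHn; lra. Qed.

Lemma sumR_shift' n f : sumR n f + f n = f O + sumR n (fun i => f (S i)).
Proof. exact (sumR_shift n f). Qed.

Lemma exp_le x y : x <= y -> exp x <= exp y.
Proof. intros [H|H]; [left; apply exp_increasing; auto| subst; lra]. Qed.

Lemma ln_le_sub1 x : 0 < x -> ln x <= x - 1.
Proof. intros H. pose proof (exp_ineq1_le (ln x)). rewrite exp_ln in H0; lra. Qed.

Lemma ln_mono x y : 0 < x -> x <= y -> ln x <= ln y.
Proof. intros Hx Hxy. destruct (Rle_or_lt (ln x) (ln y)); auto.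
  apply exp_increasing in H. rewrite !exp_ln in H; lra. Qed.

Module ExpQuad.
From Coquelicot Require Import Coquelicot.
Lemma exp_quad x : 0 <= x -> exp (- x) <= 1 - x + x * x / 2.
Proof. intros Hx.
  set (g := fun y => exp (- y) - 1 + y - y * y / 2).
  destruct (MVT_gen g 0 x (fun y => - exp (- y) + 1 - y)) as [c [Hc Hd]].
  - intros y _. unfold g. auto_derive; auto. field.
  - intros y _. apply continuity_pt_filterlim. apply (ex_derive_continuous (K:=R_AbsRing) (V:=R_NormedModule)).
    unfold g. auto_derive; auto.
  - rewrite Rmin_left in Hc by lra. rewrite Rmax_right in Hc by lra.
    unfold g in Hd. rewrite Ropp_0, exp_0 in Hd.
    pose proof (exp_ineq1_le (- c)). nra.
Qed.
End ExpQuad.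
Definition exp_quad := ExpQuad.exp_quad.

Lemma sumR_delta0 n c (g : nat -> R) :
  sumR n (fun u => if (c =? u)%nat then g u else 0) = if (c <? n)%nat then g c else 0.
Proof. pose proof (sumR_delta n 0 c g) as E. simpl in E. rewrite E. reflexivity. Qed.

Lemma sumR_mult n m f g : sumR n f * sumR m g = sumR n (fun i => sumR m (fun j => f i * g j)).
Proof. rewrite Rmult_comm, <- sumR_scal. apply sumR_ext; intros i _.
  rewrite Rmult_comm, <- sumR_scal. apply sumR_ext; intros; lra. Qed.

Lemma sumR_if0 n (b : nat -> bool) f :
  sumR n (fun i => if b i then f i else 0) = sumR n (fun i => (if b i then 1 else 0) * f i).
Proof. apply sumR_ext; intros i _; destruct (b i); lra. Qed.

Lemma count_le n t a0 :
  sumR n (fun k => if Rlt_dec a0 (INR k) then (if (k <? t)%nat then 1 else 0) else 0)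
  <= Rmax 0 (INR (Nat.min n t) - a0).
Proof. induction n; simpl sumR.
  - simpl. apply Rmax_l.
  - destruct (Rlt_dec a0 (INR n)) as [H1|H1]; destruct (n <? t)%nat eqn:H2.
    + apply Nat.ltb_lt in H2. replace (Nat.min (S n) t) with (S n) by lia.
      replace (Nat.min n t) with n in IHn by lia. rewrite S_INR.
      rewrite Rmax_right in IHn by lra. rewrite Rmax_right by lra. lra.
    + rewrite Rplus_0_r. eapply Rle_trans; [apply IHn|]. apply Rle_max_compat_l.
      apply Rplus_le_compat_r. apply le_INR; lia.
    + rewrite Rplus_0_r. eapply Rle_trans; [apply IHn|]. apply Rle_max_compat_l.
      apply Rplus_le_compat_r. apply le_INR; lia.
    + rewrite Rplus_0_r. eapply Rle_trans; [apply IHn|]. apply Rle_max_compat_l.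
      apply Rplus_le_compat_r. apply le_INR; lia.
Qed.

Lemma one_minus_exp x : 0 <= x <= / 2 -> exp (- (2 * x)) <= 1 - x.
Proof. intros Hx. pose proof (exp_ineq1_le (2 * x)).
  pose proof (exp_pos (2 * x)).
  assert (exp (- (2 * x)) = / exp (2 * x)) by (rewrite exp_Ropp; auto). rewrite H1.
  apply Rmult_le_reg_l with (exp (2 * x)); auto. rewrite Rinv_r by lra. nra. Qed.

Ltac bool2prop := repeat match goal with
 | H : (_ <=? _)%nat = true |- _ => apply Nat.leb_le in H
 | H : (_ <=? _)%nat = false |- _ => apply Nat.leb_gt in H
 | H : (_ <? _)%nat = true |- _ => apply Nat.ltb_lt in H
 | H : (_ <? _)%nat = false |- _ => apply Nat.ltb_ge in H
 | H : (_ =? _)%nat = true |- _ => apply Nat.eqb_eq in H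
 | H : (_ =? _)%nat = false |- _ => apply Nat.eqb_neq in H
 | H : (_ && _)%bool = true |- _ => apply andb_true_iff in H; destruct H
 | H : (_ && _)%bool = false |- _ => apply andb_false_iff in H; destruct H
 end.

Lemma count_win n k dl :
  sumR n (fun j => if ((k <? j) && (j <=? k + dl))%nat%bool then 1 else 0) <= INR (Nat.min dl (n - S k)).
Proof. induction n; simpl sumR.
  - simpl. replace (Nat.min dl 0) with O by lia. simpl; lra.
  - destruct ((k <? n) && (n <=? k + dl))%nat%bool eqn:E; bool2prop.
    + replace (Nat.min dl (S n - S k)) with (S (Nat.min dl (n - S k))) by lia. rewrite S_INR; lra.
    + eapply Rle_trans; [|apply le_INR; instantiate (1 := Nat.min dl (n - S k)); lia]. lra.
    + eapply Rle_trans; [|apply le_INR; instantiate (1 := Nat.min dl (n - S k)); lia]. lra.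
Qed.


Section Main.
Variables (K T : nat) (loss : nat -> nat -> R) (d : nat -> nat) (eta beta : R).
Hypothesis hK : (2 <= K)%nat.
Hypothesis hloss : forall t a, (1 <= t)%nat -> (a < K)%nat -> 0 <= loss t a <= 1.
Hypothesis heta : 0 < eta.
Hypothesis hbeta : 0 < beta.

Definition e := eta' eta beta.
Definition pr := prob K loss d eta beta.
Definition Ar (r : list (nat * R)) i := fst (nth i r (O, 1)).
Definition Pr (r : list (nat * R)) i := snd (nth i r (O, 1)).
Definition est r i a :=
  if (Ar r i =? a)%nat then
    (if Rlt_dec (INR (d (S i))) beta then loss (S i) a / Pr r i else 0) else 0.
Definition L r m a :=
  sumR (length r) (fun i => if (S i + d (S i) <=? m)%nat then est r i a else 0).
Definition W r m := sumR K (fun b => exp (- e * L r m b)).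
Definition Q r m a := exp (- e * L r m a) / W r m.

Lemma e_pos : 0 < e.
Proof. unfold e, eta'. apply Rmin_pos; auto. apply Rinv_0_lt_compat.
  pose proof (exp_pos 1); nra. Qed.

Lemma e_le_eta : e <= eta.
Proof. unfold e, eta'; apply Rmin_l. Qed.

Lemma e_beta : e * (4 * exp 1 * beta) <= 1.
Proof. unfold e, eta'. pose proof (exp_pos 1).
  apply Rle_trans with (/ (4 * exp 1 * beta) * (4 * exp 1 * beta)).
  apply Rmult_le_compat_r; [nra|apply Rmin_r].
  rewrite Rinv_l; [lra|nra]. Qed.

Lemma cum_est_L r a : cum_est loss d beta r a = L r (length r) a.
Proof. unfold cum_est, L. apply sumR_ext; intros i _.
  unfold est, Ar, Pr. destruct (nth i r (O,1)) as [As ps]. cbn [fst snd].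
  destruct (S i + d (S i) <=? length r)%nat; destruct (As =? a)%nat; reflexivity. Qed.

Lemma W_pos r m : 0 < W r m.
Proof. unfold W. destruct K as [|K']; [lia|]. simpl.
  pose proof (exp_pos (- e * L r m K')).
  pose proof (sumR_nonneg K' (fun b => exp (- e * L r m b)) (fun i _ => Rlt_le _ _ (exp_pos _))).
  lra. Qed.

Lemma Q_pos r m a : 0 < Q r m a.
Proof. unfold Q. apply Rdiv_lt_0_compat; [apply exp_pos|apply W_pos]. Qed.

Lemma Q_sum r m : sumR K (fun a => Q r m a) = 1.
Proof. unfold Q. unfold Rdiv. rewrite (sumR_ext _ _ (fun a => / W r m * exp (- e * L r m a))).
  rewrite sumR_scal. fold (W r m). field. apply Rgt_not_eq, W_pos.
  intros; lra. Qed.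

Lemma pr_Q r a : pr r a = Q r (length r) a.
Proof. unfold pr, prob, weight, Q, W. rewrite cum_est_L. f_equal.
  apply sumR_ext; intros; rewrite cum_est_L; reflexivity. Qed.

Lemma pr_sum r : sumR K (fun a => pr r a) = 1.
Proof. rewrite (sumR_ext _ _ (fun a => Q r (length r) a)). apply Q_sum.
  intros; apply pr_Q. Qed.

Lemma pr_pos r a : 0 < pr r a.
Proof. rewrite pr_Q; apply Q_pos. Qed.

Lemma nth_app_l (r t : list (nat * R)) i : (i < length r)%nat -> nth i (r ++ t) (O,1) = nth i r (O,1).
Proof. intros; apply app_nth1; auto. Qed.

Lemma L_app r t m a : (m <= length r)%nat -> L (r ++ t) m a = L r m a.
Proof. intros H. unfold L. rewrite length_app, sumR_add.
  rewrite (sumR_ext (length t) _ (fun _ => 0)).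
  rewrite sumR_const; rewrite Rmult_0_r, Rplus_0_r.
  apply sumR_ext; intros i Hi. unfold est, Ar, Pr. rewrite nth_app_l; auto.
  intros i Hi. replace (S (length r + i) + d (S (length r + i)) <=? m)%nat with false; auto.
  symmetry; apply Nat.leb_gt; lia. Qed.

Lemma W_app r t m : (m <= length r)%nat -> W (r ++ t) m = W r m.
Proof. intros; unfold W; apply sumR_ext; intros; rewrite L_app; auto. Qed.

Lemma Q_app r t m a : (m <= length r)%nat -> Q (r ++ t) m a = Q r m a.
Proof. intros; unfold Q; rewrite W_app, L_app; auto. Qed.

Definition Rj (j : nat) (r1 r2 : list (nat * R)) :=
  length r1 = length r2 /\ forall k, k <> j -> nth k r1 (O,1) = nth k r2 (O,1).

Lemma est_Rj j r1 r2 k a : Rj j r1 r2 -> k <> j -> est r1 k a = est r2 k a.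
Proof. intros [_ H] Hk. unfold est, Ar, Pr. rewrite H; auto. Qed.

Lemma L_Rj j r1 r2 m a : Rj j r1 r2 -> (m < S j + d (S j))%nat -> L r1 m a = L r2 m a.
Proof. intros HR Hm. unfold L. destruct HR as [Hl Hn]. rewrite Hl.
  apply sumR_ext; intros i Hi. destruct (Nat.eq_dec i j).
  - subst. replace (S j + d (S j) <=? m)%nat with false; auto. symmetry; apply Nat.leb_gt; lia.
  - rewrite (est_Rj j r1 r2); auto. split; auto. Qed.

Lemma W_Rj j r1 r2 m : Rj j r1 r2 -> (m < S j + d (S j))%nat -> W r1 m = W r2 m.
Proof. intros; unfold W; apply sumR_ext; intros; erewrite L_Rj; eauto. Qed.

Lemma Q_Rj j r1 r2 m a : Rj j r1 r2 -> (m < S j + d (S j))%nat -> Q r1 m a = Q r2 m a.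
Proof. intros; unfold Q; erewrite W_Rj, L_Rj; eauto. Qed.

Lemma pr_Rj j r1 r2 a : Rj j r1 r2 -> (length r1 < S j + d (S j))%nat -> pr r1 a = pr r2 a.
Proof. intros HR Hl. rewrite !pr_Q. destruct HR as [E ?]. rewrite <- E. eapply Q_Rj; eauto. split; auto. Qed.

Lemma Rj_app j r1 r2 x : Rj j r1 r2 -> Rj j (r1 ++ x :: nil) (r2 ++ x :: nil).
Proof. intros [Hl Hn]. split. rewrite !length_app, Hl; auto.
  intros k Hk. destruct (Nat.lt_ge_cases k (length r1)).
  - rewrite !nth_app_l; auto. lia.
  - rewrite !app_nth2; try lia. rewrite Hl; auto. Qed.


Fixpoint Ex (n : nat) (F : list (nat * R) -> R) (r : list (nat * R)) : R :=
  match n with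
  | O => F r
  | S n' => sumR K (fun b => pr r b * Ex n' F (r ++ (b, pr r b) :: nil))
  end.

Fixpoint valid (r t : list (nat * R)) : Prop :=
  match t with
  | nil => True
  | x :: t' => (fst x < K)%nat /\ snd x = pr r (fst x) /\ valid (r ++ x :: nil) t'
  end.

Lemma Ex_ext n : forall r F G, (forall t, length t = n -> F (r ++ t) = G (r ++ t)) ->
  Ex n F r = Ex n G r.
Proof. induction n; intros r F G H; simpl.
  - specialize (H nil eq_refl). rewrite !app_nil_r in H; auto.
  - apply sumR_ext; intros b _. f_equal. apply IHn. intros t Ht.
    rewrite <- !app_assoc. apply H. simpl; auto. Qed.

Lemma Ex_mono n : forall r F G, (forall t, length t = n -> valid r t -> F (r ++ t) <= G (r ++ t)) ->
  Ex n F r <= Ex n G r.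
Proof. induction n; intros r F G H; simpl.
  - specialize (H nil eq_refl I). rewrite !app_nil_r in H; auto.
  - apply sumR_le; intros b Hb. apply Rmult_le_compat_l; [apply Rlt_le, pr_pos|].
    apply IHn. intros t Ht Hv. rewrite <- !app_assoc. apply H. simpl; auto.
    simpl; auto. Qed.

Lemma Ex_plus n : forall r F G, Ex n (fun x => F x + G x) r = Ex n F r + Ex n G r.
Proof. induction n; intros; simpl; auto. rewrite <- sumR_plus. apply sumR_ext; intros.
  rewrite IHn; lra. Qed.

Lemma Ex_scal n : forall r c F, Ex n (fun x => c * F x) r = c * Ex n F r.
Proof. induction n; intros; simpl; auto. rewrite <- sumR_scal. apply sumR_ext; intros.
  rewrite IHn; lra. Qed.

Lemma Ex_const n : forall r c, Ex n (fun _ => c) r = c.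
Proof. induction n; intros; simpl; auto.
  rewrite (sumR_ext _ _ (fun b => c * pr r b)). rewrite sumR_scal, pr_sum; lra.
  intros; rewrite IHn; lra. Qed.

Lemma Ex_sum n : forall r m (F : nat -> list (nat * R) -> R),
  Ex n (fun x => sumR m (fun j => F j x)) r = sumR m (fun j => Ex n (F j) r).
Proof. intros r m; revert r; induction m; intros; simpl.
  - apply Ex_const.
  - rewrite Ex_plus, IHm; auto. Qed.

Lemma Ex_split n1 : forall n2 r F, Ex (n1 + n2) F r = Ex n1 (fun r' => Ex n2 F r') r.
Proof. induction n1; intros; simpl; auto. apply sumR_ext; intros; rewrite IHn1; auto. Qed.

Lemma Ex_prefix n r F : (forall t, length t = n -> F (r ++ t) = F r) -> Ex n F r = F r.
Proof. intros H. rewrite (Ex_ext n r F (fun _ => F r)). apply Ex_const.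
  intros; apply H; auto. Qed.

Lemma Ex_nonneg n : forall r F, (forall x, 0 <= F x) -> 0 <= Ex n F r.
Proof. induction n; intros; simpl; auto. apply sumR_nonneg; intros.
  apply Rmult_le_pos; [apply Rlt_le, pr_pos| apply IHn; auto]. Qed.

Lemma Ex_set j n : forall r1 r2 H, Rj j r1 r2 -> (forall s1 s2, Rj j s1 s2 -> H s1 = H s2) ->
  (length r1 + n <= S j + d (S j))%nat -> Ex n H r1 = Ex n H r2.
Proof. induction n; intros r1 r2 H HR HH Hl; simpl; auto.
  apply sumR_ext; intros b _. rewrite (pr_Rj j r1 r2 b HR); [|lia].
  f_equal. apply IHn; auto. apply Rj_app; auto. rewrite length_app; simpl; lia. Qed.

Lemma Ex_step n r (f : nat * R -> R) H z :
  (forall x, Ex n H (r ++ x :: nil) = Ex n H (r ++ z :: nil)) ->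
  Ex (S n) (fun r' => f (nth (length r) r' (O,1)) * H r') r
  = sumR K (fun b => pr r b * f (b, pr r b)) * Ex n H (r ++ z :: nil).
Proof. intros Hinv. simpl. rewrite Rmult_comm, <- sumR_scal. apply sumR_ext; intros b _.
  rewrite (Ex_ext n _ _ (fun r' => f (b, pr r b) * H r')).
  rewrite Ex_scal, Hinv; lra.
  intros t _. rewrite <- app_assoc. rewrite app_nth2; [|lia]. rewrite Nat.sub_diag; auto. Qed.

Lemma Ex_step_inv j n r (f : nat * R -> R) H z :
  length r = j -> (forall s1 s2, Rj j s1 s2 -> H s1 = H s2) ->
  (S j + n <= S j + d (S j))%nat ->
  Ex (S n) (fun r' => f (nth j r' (O,1)) * H r') r
  = sumR K (fun b => pr r b * f (b, pr r b)) * Ex n H (r ++ z :: nil).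
Proof. intros Hl HH Hn. subst j. apply Ex_step. intros x. apply (Ex_set (length r)); auto.
  split. rewrite !length_app; auto. intros k Hk.
  destruct (Nat.lt_ge_cases k (length r)). rewrite !nth_app_l; auto.
  rewrite !app_nth2; auto. destruct (k - length r)%nat eqn:E; [lia|]. simpl. destruct n0; auto.
  rewrite length_app; simpl; lia. Qed.

Lemma valid_props t : forall r, valid r t -> forall i, (length r <= i < length r + length t)%nat ->
  (Ar (r ++ t) i < K)%nat /\ Pr (r ++ t) i = Q (r ++ t) i (Ar (r ++ t) i).
Proof. induction t as [|x t IH]; intros r Hv i Hi; simpl in *. lia.
  destruct Hv as [H1 [H2 H3]].
  destruct (Nat.eq_dec i (length r)).
  - subst i. unfold Ar, Pr. rewrite app_nth2; [|lia]. rewrite Nat.sub_diag. simpl.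
    split; auto. rewrite H2, pr_Q. rewrite (Q_app r (x :: t)); auto.
  - replace (r ++ x :: t) with ((r ++ x :: nil) ++ t) by (rewrite <- app_assoc; auto).
    apply IH; auto. rewrite length_app; simpl; lia. Qed.

Lemma exp_loss_Ex n : forall r, exp_loss K loss d eta beta n r =
  Ex n (fun r' => sumR n (fun k => loss (S (length r + k)) (Ar r' (length r + k)))) r.
Proof. induction n; intros r; simpl; auto.
  apply sumR_ext; intros b _. fold (pr r b). f_equal.
  rewrite (Ex_ext n _ _ (fun r' => loss (S (length r)) b +
     sumR n (fun k => loss (S (length (r ++ (b, pr r b) :: nil) + k))
                        (Ar r' (length (r ++ (b, pr r b) :: nil) + k))))).
  rewrite Ex_plus, Ex_const, IHn; auto.
  intros t _. rewrite (sumR_shift' n (fun k => loss (S (length r + k)) (Ar ((r ++ (b, pr r b) :: nil) ++ t) (length r + k)))). f_equal.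
  - rewrite Nat.add_0_r. unfold Ar. rewrite <- app_assoc, app_nth2, Nat.sub_diag; auto.
  - apply sumR_ext; intros k _. rewrite length_app; simpl.
    replace (length r + S k)%nat with (length r + 1 + k)%nat by lia. auto. Qed.

Definition okR i := if Rlt_dec (INR (d (S i))) beta then 1 else 0.
Definition X r m b := sumR T (fun k => if (S k + d (S k) =? m)%nat then est r k b else 0).

Section Path.
Variable r : list (nat * R).
Hypothesis hlen : length r = T.
Hypothesis hv : forall i, (i < T)%nat -> (Ar r i < K)%nat /\ Pr r i = Q r i (Ar r i).

Lemma P_pos i : (i < T)%nat -> 0 < Pr r i.
Proof. intros Hi. rewrite (proj2 (hv i Hi)). apply Q_pos. Qed.

Lemma est_nonneg i b : (i < T)%nat -> 0 <= est r i b.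
Proof. intros Hi. unfold est. destruct (Ar r i =? b)%nat eqn:E; [|lra].
  apply Nat.eqb_eq in E. destruct (Rlt_dec _ _); [|lra].
  unfold Rdiv; apply Rmult_le_pos; [|apply Rlt_le, Rinv_0_lt_compat, P_pos; auto]. apply hloss; [lia|]. rewrite <- E; apply hv; auto. Qed.

Lemma X_nonneg m b : 0 <= X r m b.
Proof. unfold X. apply sumR_nonneg; intros k Hk. destruct (_ =? _)%nat; [apply est_nonneg; auto|lra]. Qed.

Lemma L_S m b : L r (S m) b = L r m b + X r (S m) b.
Proof. unfold L, X. rewrite hlen, <- sumR_plus. apply sumR_ext; intros k _.
  destruct (S k + d (S k) <=? S m)%nat eqn:E1; destruct (S k + d (S k) <=? m)%nat eqn:E2;
  destruct (S k + d (S k) =? S m)%nat eqn:E3; try lra;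
  try (apply Nat.leb_le in E1 || apply Nat.leb_gt in E1);
  try (apply Nat.leb_le in E2 || apply Nat.leb_gt in E2);
  try (apply Nat.eqb_eq in E3 || apply Nat.eqb_neq in E3); lia. Qed.

Lemma L_0 b : L r 0 b = 0.
Proof. unfold L. rewrite (sumR_ext _ _ (fun _ => 0)). rewrite sumR_const; lra.
  intros; simpl; auto. Qed.

Lemma L_mono m u b : L r m b <= L r (m + u) b.
Proof. induction u. rewrite Nat.add_0_r; lra. rewrite Nat.add_succ_r, L_S. pose proof (X_nonneg (S (m+u)) b); lra. Qed.

Lemma L_nonneg m b : 0 <= L r m b.
Proof. pose proof (L_mono 0 m b). rewrite L_0 in H. auto. Qed.

Lemma W_S m : W r (S m) = W r m * sumR K (fun b => Q r m b * exp (- e * X r (S m) b)).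
Proof. unfold W at 1. rewrite <- sumR_scal. apply sumR_ext; intros b _.
  rewrite L_S. unfold Q. rewrite Rmult_plus_distr_l, exp_plus. field. apply Rgt_not_eq, W_pos. Qed.

Lemma W_S_le m : W r (S m) <= W r m.
Proof. unfold W. apply sumR_le; intros b _. rewrite L_S. apply exp_le.
  pose proof (X_nonneg (S m) b); pose proof e_pos; nra. Qed.

Lemma pot_step m : ln (W r (S m)) - ln (W r m) <=
  - e * sumR K (fun b => Q r m b * X r (S m) b)
  + e * e / 2 * sumR K (fun b => Q r m b * (X r (S m) b * X r (S m) b)).
Proof. pose proof (W_pos r (S m)) as H1. rewrite W_S in H1. rewrite W_S.
  set (S0 := sumR K (fun b => Q r m b * exp (- e * X r (S m) b))) in *.
  assert (HS : 0 < S0). { pose proof (W_pos r m) as H2. nra. }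
  rewrite ln_mult; [|apply W_pos|auto].
  apply Rle_trans with (S0 - 1); [pose proof (ln_le_sub1 S0 HS); lra|].
  unfold S0. rewrite <- (Q_sum r m).
  rewrite <- !sumR_scal, <- sumR_plus.
  assert (forall a b, a - b = a + (-1) * b) as Hm by (intros; ring). rewrite Hm. rewrite <- sumR_scal, <- sumR_plus.
  apply sumR_le; intros b _. pose proof (Q_pos r m b). pose proof e_pos.
  pose proof (X_nonneg (S m) b).
  pose proof (exp_quad (e * X r (S m) b) ltac:(nra)).
  replace (- e * X r (S m) b) with (- (e * X r (S m) b)) by ring. nra. Qed.

Lemma Q_lower m b : Q r m b * (1 - e * X r (S m) b) <= Q r (S m) b.
Proof. unfold Q. rewrite L_S, Rmult_plus_distr_l, exp_plus.
  pose proof (W_S_le m). pose proof (W_pos r (S m)). pose proof (W_pos r m).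
  pose proof (exp_pos (- e * L r m b)).
  pose proof (exp_ineq1_le (- e * X r (S m) b)).
  assert (0 < / W r m <= / W r (S m)) by (split; [apply Rinv_0_lt_compat; auto|apply Rinv_le_contravar; auto]).
  pose proof (exp_pos (- e * X r (S m) b)).
  unfold Rdiv. set (a := exp (- e * L r m b)) in *. set (y := exp (- e * X r (S m) b)) in *.
  set (i1 := / W r m) in *. set (i2 := / W r (S m)) in *.
  assert (a * i1 <= a * i2) by (apply Rmult_le_compat_l; lra).
  assert (0 < a * i1) by (apply Rmult_lt_0_compat; lra).
  destruct (Rle_or_lt (1 - e * X r (S m) b) 0). nra. nra. Qed.

Definition Z k m := sumR K (fun b => Q r m b * est r k b).
Definition Y k j := sumR K (fun b => Q r (j + d (S j)) b * est r k b * est r j b).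

Lemma Z_self k : (k < T)%nat -> Z k k = okR k * loss (S k) (Ar r k).
Proof. intros Hk. destruct (hv k Hk) as [HA HP]. unfold Z, est.
  rewrite (sumR_ext _ _ (fun b => if (Ar r k =? b)%nat then Q r k b *
     (if Rlt_dec (INR (d (S k))) beta then loss (S k) b / Pr r k else 0) else 0)).
  rewrite sumR_single; auto. unfold okR. rewrite HP. destruct (Rlt_dec _ _); [|lra].
  field. apply Rgt_not_eq, Q_pos.
  intros b _. destruct (Ar r k =? b)%nat; lra. Qed.

Lemma eqS k m : (S k + d (S k) =? S m)%nat = (k + d (S k) =? m)%nat.
Proof. reflexivity. Qed.

Lemma hX_sum (h : nat -> R) m : sumR K (fun b => h b * X r (S m) b) =
  sumR T (fun j => if (j + d (S j) =? m)%nat then sumR K (fun b => h b * est r j b) else 0).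
Proof. unfold X. rewrite (sumR_ext K _ (fun b => sumR T (fun j => h b *
     (if (j + d (S j) =? m)%nat then est r j b else 0)))).
  rewrite sumR_swap. apply sumR_ext; intros j _. destruct (j + d (S j) =? m)%nat; auto.
  rewrite (sumR_ext K _ (fun _ => 0)) by (intros; ring). rewrite sumR_const; lra.
  intros b _. rewrite <- sumR_scal. apply sumR_ext; intros j _. rewrite eqS; auto. Qed.

Lemma A_total M : (forall k, (k < T)%nat -> (k + d (S k) < M)%nat) ->
  sumR M (fun m => sumR K (fun b => Q r m b * X r (S m) b)) = sumR T (fun k => Z k (k + d (S k))).
Proof. intros HM. rewrite (sumR_ext M _ (fun m => sumR T (fun k => if (k + d (S k) =? m)%nat then Z k m else 0))).
  rewrite sumR_swap. apply sumR_ext; intros k Hk. rewrite sumR_delta0.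
  replace (k + d (S k) <? M)%nat with true; auto. symmetry; apply Nat.ltb_lt; auto.
  intros m _. rewrite hX_sum. auto. Qed.

Lemma B_total M : (forall k, (k < T)%nat -> (k + d (S k) < M)%nat) ->
  sumR M (fun m => sumR K (fun b => Q r m b * (X r (S m) b * X r (S m) b))) =
  sumR T (fun k => sumR T (fun j => if (k + d (S k) =? j + d (S j))%nat then Y k j else 0)).
Proof. intros HM. rewrite (sumR_swap T T).
  rewrite (sumR_ext M _ (fun m => sumR T (fun j => sumR T (fun k =>
     if (j + d (S j) =? m)%nat then (if (k + d (S k) =? m)%nat then
        sumR K (fun b => Q r m b * est r k b * est r j b) else 0) else 0)))).
  - rewrite sumR_swap. apply sumR_ext; intros j Hj. rewrite sumR_swap. apply sumR_ext; intros k _.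
    rewrite (sumR_delta0 M (j + d (S j)) (fun m => if (k + d (S k) =? m)%nat then
        sumR K (fun b => Q r m b * est r k b * est r j b) else 0)).
    replace (j + d (S j) <? M)%nat with true by (symmetry; apply Nat.ltb_lt; auto). auto.
  - intros m _. rewrite (sumR_ext K _ (fun b => (Q r m b * X r (S m) b) * X r (S m) b)) by (intros; ring).
    rewrite hX_sum. apply sumR_ext; intros j _.
    destruct (j + d (S j) =? m)%nat.
    + rewrite (sumR_ext K _ (fun b => (Q r m b * est r j b) * X r (S m) b)) by (intros; ring).
      rewrite hX_sum. apply sumR_ext; intros k _.
      destruct (k + d (S k) =? m)%nat; auto. apply sumR_ext; intros; ring.
    + rewrite sumR_const; lra. Qed.

Lemma drift k : (k < T)%nat -> Z k k - Z k (k + d (S k)) <=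
  e * sumR T (fun j => if ((k <=? j + d (S j)) && (j + d (S j) <? k + d (S k)))%nat%bool then Y k j else 0).
Proof. intros Hk.
  assert (Htel : Z k k - Z k (k + d (S k)) = sumR (d (S k)) (fun u => Z k (k + u) - Z k (S (k + u)))).
  { pose proof (sumR_tele (d (S k)) (fun u => - Z k (k + u))) as E. cbv beta in E.
    rewrite Nat.add_0_r in E. rewrite <- (sumR_ext _ (fun u => - Z k (k + S u) - - Z k (k + u))). lra.
    intros u _. rewrite Nat.add_succ_r; lra. }
  rewrite Htel.
  apply Rle_trans with (sumR (d (S k)) (fun u => e * sumR K (fun b => (Q r (k + u) b * est r k b) * X r (S (k + u)) b))).
  - apply sumR_le; intros u _. unfold Z. rewrite <- sumR_scal.
    assert (forall a b, a - b = a + (-1) * b) as Hm by (intros; ring). rewrite Hm, <- sumR_scal, <- sumR_plus.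
    apply sumR_le; intros b _. pose proof (Q_lower (k + u) b). pose proof (est_nonneg k b Hk). nra.
  - rewrite sumR_scal. apply Rmult_le_compat_l; [apply Rlt_le, e_pos|].
    right. rewrite (sumR_ext _ _ (fun u => sumR T (fun j => if (j + d (S j) =? k + u)%nat
        then sumR K (fun b => Q r (k + u) b * est r k b * est r j b) else 0))).
    rewrite sumR_swap. apply sumR_ext; intros j _.
    rewrite (sumR_delta (d (S k)) k (j + d (S j)) (fun m => sumR K (fun b => Q r m b * est r k b * est r j b))).
    reflexivity.
    intros u _. rewrite hX_sum. reflexivity. Qed.

Definition cc k j :=
  (if ((k <=? j + d (S j)) && (j + d (S j) <? k + d (S k)))%nat%bool then 1 else 0)
  + (if (k + d (S k) =? j + d (S j))%nat then / 2 else 0).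

Lemma pathwise M a : (forall k, (k < T)%nat -> (k + d (S k) < M)%nat) -> (a < K)%nat ->
  sumR T (fun k => okR k * loss (S k) (Ar r k)) <=
  ln (INR K) / e + L r M a + e * sumR T (fun k => sumR T (fun j => cc k j * Y k j)).
Proof. intros HM Ha. pose proof e_pos as He.
  assert (Hpot : ln (W r M) - ln (W r 0) <=
     - e * sumR M (fun m => sumR K (fun b => Q r m b * X r (S m) b))
     + e * e / 2 * sumR M (fun m => sumR K (fun b => Q r m b * (X r (S m) b * X r (S m) b)))).
  { rewrite <- (sumR_tele M (fun m => ln (W r m))). rewrite <- !sumR_scal, <- sumR_plus.
    apply sumR_le; intros m _. apply pot_step. }
  rewrite A_total, B_total in Hpot; auto.
  assert (HW0 : W r 0 = INR K).
  { unfold W. rewrite (sumR_ext _ _ (fun _ => 1)). rewrite sumR_const; lra.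
    intros; rewrite L_0, Rmult_0_r, exp_0; auto. }
  assert (HWM : - e * L r M a <= ln (W r M)).
  { rewrite <- (ln_exp (- e * L r M a)). apply ln_mono; [apply exp_pos|].
    unfold W. destruct K as [|K']; [lia|]. simpl.
    destruct (Nat.eq_dec a K'). subst. pose proof (sumR_nonneg K' (fun b => exp (- e * L r M b)) (fun i _ => Rlt_le _ _ (exp_pos _))). lra.
    pose proof (sumR_single K' a (fun b => exp (- e * L r M b)) ltac:(lia)) as E.
    rewrite <- E. pose proof (exp_pos (- e * L r M K')).
    assert (sumR K' (fun b => if (a =? b)%nat then exp (- e * L r M b) else 0) <= sumR K' (fun b => exp (- e * L r M b))).
    apply sumR_le; intros. destruct (a =? i)%nat; [lra|apply Rlt_le, exp_pos]. lra. }
  rewrite HW0 in Hpot.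
  assert (Hself : sumR T (fun k => okR k * loss (S k) (Ar r k)) =
     sumR T (fun k => Z k (k + d (S k))) + sumR T (fun k => Z k k - Z k (k + d (S k)))).
  { rewrite <- sumR_plus. apply sumR_ext; intros k Hk. rewrite Z_self; auto; lra. }
  assert (Hdr : sumR T (fun k => Z k k - Z k (k + d (S k))) <= e * sumR T (fun k =>
     sumR T (fun j => if ((k <=? j + d (S j)) && (j + d (S j) <? k + d (S k)))%nat%bool then Y k j else 0))).
  { rewrite <- sumR_scal. apply sumR_le; intros; apply drift; auto. }
  assert (Hcc : sumR T (fun k => sumR T (fun j => cc k j * Y k j)) =
     sumR T (fun k => sumR T (fun j => if ((k <=? j + d (S j)) && (j + d (S j) <? k + d (S k)))%nat%bool then Y k j else 0))
     + / 2 * sumR T (fun k => sumR T (fun j => if (k + d (S k) =? j + d (S j))%nat then Y k j else 0))).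
  { rewrite <- sumR_scal, <- sumR_plus. apply sumR_ext; intros k _. rewrite <- sumR_scal, <- sumR_plus.
    apply sumR_ext; intros j _. unfold cc. destruct (_ && _)%bool; destruct (_ =? _)%nat; lra. }
  rewrite Hself, Hcc.
  set (SA := sumR T (fun k => Z k (k + d (S k)))) in *.
  set (SB := sumR T (fun k => sumR T (fun j => if (k + d (S k) =? j + d (S j))%nat then Y k j else 0))) in *.
  set (SD := sumR T (fun k => sumR T (fun j => if ((k <=? j + d (S j)) && (j + d (S j) <? k + d (S k)))%nat%bool then Y k j else 0))) in *.
  assert (SA <= ln (INR K) / e + L r M a + e / 2 * SB).
  { apply Rmult_le_reg_l with e; auto. unfold Rdiv. field_simplify; [|lra]. nra. }
  nra. Qed.

Lemma Z_gen k m : (k < T)%nat -> Z k m = okR k * (Q r m (Ar r k) * loss (S k) (Ar r k) / Pr r k).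
Proof. intros Hk. destruct (hv k Hk) as [HA HP]. unfold Z, est.
  rewrite (sumR_ext _ _ (fun b => if (Ar r k =? b)%nat then Q r m b *
     (if Rlt_dec (INR (d (S k))) beta then loss (S k) b / Pr r k else 0) else 0)).
  rewrite sumR_single; auto. unfold okR. destruct (Rlt_dec _ _); field.
  rewrite HP; apply Rgt_not_eq, Q_pos. rewrite HP; apply Rgt_not_eq, Q_pos.
  intros b _. destruct (Ar r k =? b)%nat; lra. Qed.

Definition N1 u := sumR T (fun k => okR k * (if (k + d (S k) =? u)%nat then 1 else 0)).
Definition Nw s u := sumR T (fun k => okR k * (if ((s <=? k + d (S k)) && (k + d (S k) <? u))%nat%bool then 1 else 0)).

Lemma okR_01 k : 0 <= okR k <= 1.
Proof. unfold okR; destruct (Rlt_dec _ _); lra. Qed.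

Lemma Nw_S s u : (s <= u)%nat -> Nw s (S u) = Nw s u + N1 u.
Proof. intros H. unfold Nw, N1. rewrite <- sumR_plus. apply sumR_ext; intros k _.
  destruct (s <=? k + d (S k))%nat eqn:E1; destruct (k + d (S k) <? S u)%nat eqn:E2;
  destruct (k + d (S k) <? u)%nat eqn:E3; destruct (k + d (S k) =? u)%nat eqn:E4; simpl; try lra;
  try (apply Nat.leb_le in E1 || apply Nat.leb_gt in E1);
  try (apply Nat.ltb_lt in E2 || apply Nat.ltb_ge in E2);
  try (apply Nat.ltb_lt in E3 || apply Nat.ltb_ge in E3);
  try (apply Nat.eqb_eq in E4 || apply Nat.eqb_neq in E4); lia. Qed.

Lemma Nw_s s : Nw s s = 0.
Proof. unfold Nw. rewrite (sumR_ext _ _ (fun _ => 0)). rewrite sumR_const; lra.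
  intros k _. destruct (s <=? k + d (S k))%nat eqn:E1; destruct (k + d (S k) <? s)%nat eqn:E2; simpl; try lra.
  apply Nat.leb_le in E1; apply Nat.ltb_lt in E2; lia. Qed.

Lemma N1_le_Nw s u t : (s <= u)%nat -> (u < t)%nat -> N1 u <= Nw s t.
Proof. intros H1 H2. apply sumR_le; intros k _. pose proof (okR_01 k).
  destruct (k + d (S k) =? u)%nat eqn:E; [|destruct (_ && _)%bool; lra].
  apply Nat.eqb_eq in E. replace ((s <=? k + d (S k)) && (k + d (S k) <? t))%nat%bool with true. lra.
  symmetry; apply andb_true_iff; split; [apply Nat.leb_le|apply Nat.ltb_lt]; lia. Qed.

Lemma Nw_count s t : (s <= t)%nat -> Nw s t <= INR t - INR s + beta.
Proof. intros Hst. eapply Rle_trans.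
  - apply (sumR_le T _ (fun k => if Rlt_dec (INR s - beta) (INR k) then (if (k <? t)%nat then 1 else 0) else 0)).
    intros k _. unfold okR. destruct (Rlt_dec (INR (d (S k))) beta) as [Hd|Hd]; [|
      rewrite Rmult_0_l; destruct (Rlt_dec _ _); [destruct (k <? t)%nat|]; cbv beta iota; lra].
    rewrite Rmult_1_l. destruct ((s <=? k + d (S k)) && (k + d (S k) <? t))%nat%bool eqn:E; [|
      destruct (Rlt_dec _ _); [destruct (k <? t)%nat|]; cbv beta iota; lra].
    apply andb_true_iff in E. destruct E as [E1 E2]. apply Nat.leb_le in E1. apply Nat.ltb_lt in E2.
    destruct (Rlt_dec (INR s - beta) (INR k)) as [H|H].
    + replace (k <? t)%nat with true; [lra|]. symmetry; apply Nat.ltb_lt; lia.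
    + exfalso. apply H. apply le_INR in E1. rewrite plus_INR in E1. lra.
  - eapply Rle_trans; [apply count_le|]. apply Rmax_lub.
    + apply le_INR in Hst; lra.
    + assert (INR (Nat.min T t) <= INR t) by (apply le_INR; lia). lra. Qed.

Lemma ratio t : forall s a, (s <= t)%nat -> INR (t - s) < beta -> (a < K)%nat ->
  Q r t a <= exp 1 * Q r s a.
Proof. induction t as [t IH] using lt_wf_ind. intros s a Hst Hb Ha.
  pose proof e_pos as He. pose proof e_beta as Heb. pose proof (exp_pos 1) as He1.
  rewrite minus_INR in Hb; auto.
  assert (HNw : Nw s t < 2 * beta) by (pose proof (Nw_count s t Hst); lra).
  assert (Hgrow : forall v, (s + v <= t)%nat ->
     W r s * exp (- (2 * (e * exp 1 * Nw s (s + v)))) <= W r (s + v)).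
  { induction v; intros Hv.
    - rewrite Nat.add_0_r, Nw_s, Rmult_0_r, Rmult_0_r, Ropp_0, exp_0; lra.
    - rewrite Nat.add_succ_r. set (u := (s + v)%nat) in *.
      rewrite Nw_S by lia.
      assert (HQX : sumR K (fun b => Q r u b * X r (S u) b) <= exp 1 * N1 u).
      { rewrite (hX_sum (fun b => Q r u b) u). unfold N1. rewrite <- sumR_scal.
        apply sumR_le; intros k Hk. destruct (k + d (S k) =? u)%nat eqn:E; [|lra].
        apply Nat.eqb_eq in E. fold (Z k u). rewrite Z_gen; auto.
        destruct (hv k Hk) as [HA HP].
        unfold okR. destruct (Rlt_dec (INR (d (S k))) beta) as [Hd|Hd]; [|lra].
        assert (Hr : Q r u (Ar r k) <= exp 1 * Q r k (Ar r k)).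
        { apply IH; try lia. replace (u - k)%nat with (d (S k)) by lia. auto. }
        rewrite <- HP in Hr. pose proof (P_pos k Hk). destruct (hloss (S k) (Ar r k)) as [Hl1 Hl2]; auto; try lia.
        pose proof (Q_pos r u (Ar r k)).
        apply Rmult_le_reg_r with (Pr r k); auto. unfold Rdiv. rewrite Rmult_1_l.
        rewrite Rmult_assoc, Rinv_l by lra. nra. }
      assert (HN1 : 0 <= N1 u) by (apply sumR_nonneg; intros; pose proof (okR_01 i); destruct (_ =? _)%nat; nra).
      assert (HN1' : N1 u <= Nw s t) by (apply N1_le_Nw; lia).
      assert (HWS : W r u * (1 - e * (exp 1 * N1 u)) <= W r (S u)).
      { rewrite W_S. apply Rmult_le_compat_l; [apply Rlt_le, W_pos|].
        apply Rle_trans with (sumR K (fun b => Q r u b * (1 - e * X r (S u) b))).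
        - rewrite (sumR_ext _ _ (fun b => Q r u b + (- e) * (Q r u b * X r (S u) b))) by (intros; ring).
          rewrite sumR_plus, sumR_scal, Q_sum. nra.
        - apply sumR_le; intros b _. apply Rmult_le_compat_l; [apply Rlt_le, Q_pos|].
          pose proof (exp_ineq1_le (- e * X r (S u) b)). lra. }
      assert (Hx : 0 <= e * (exp 1 * N1 u) <= / 2).
      { split. apply Rmult_le_pos; [lra|]. apply Rmult_le_pos; lra.
        assert (e * (exp 1 * (2 * beta)) <= / 2) by nra. nra. }
      pose proof (one_minus_exp _ Hx). pose proof (IHv ltac:(lia)).
      pose proof (W_pos r s). pose proof (W_pos r u).
      replace (- (2 * (e * exp 1 * (Nw s u + N1 u)))) with
        (- (2 * (e * exp 1 * Nw s u)) + - (2 * (e * (exp 1 * N1 u)))) by ring.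
      rewrite exp_plus.
      pose proof (exp_pos (- (2 * (e * exp 1 * Nw s u)))).
      pose proof (exp_pos (- (2 * (e * (exp 1 * N1 u))))).
      nra. }
  specialize (Hgrow (t - s)%nat ltac:(lia)). replace (s + (t - s))%nat with t in Hgrow by lia.
  assert (Hbig : / exp 1 <= exp (- (2 * (e * exp 1 * Nw s t)))).
  { rewrite <- exp_Ropp. apply exp_le. assert (0 <= Nw s t) by (apply sumR_nonneg; intros; pose proof (okR_01 i); destruct (_ && _)%bool; nra).
    assert (e * exp 1 * (2 * beta) <= / 2) by nra. nra. }
  pose proof (W_pos r s). pose proof (W_pos r t).
  assert (HW : W r s <= exp 1 * W r t).
  { apply Rmult_le_reg_l with (/ exp 1). apply Rinv_0_lt_compat; auto.
    rewrite <- Rmult_assoc, Rinv_l, Rmult_1_l by lra.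
    assert (/ exp 1 * W r s <= exp (- (2 * (e * exp 1 * Nw s t))) * W r s) by (apply Rmult_le_compat_r; lra).
    lra. }
  unfold Q. pose proof (L_mono s (t - s) a). replace (s + (t - s))%nat with t in H1 by lia.
  assert (exp (- e * L r t a) <= exp (- e * L r s a)) by (apply exp_le; nra).
  pose proof (exp_pos (- e * L r t a)). pose proof (exp_pos (- e * L r s a)).
  unfold Rdiv. apply Rle_trans with (exp (- e * L r s a) * / W r t).
  apply Rmult_le_compat_r; [apply Rlt_le, Rinv_0_lt_compat|]; lra.
  apply Rmult_le_reg_r with (W r t); auto. rewrite Rmult_assoc, Rinv_l by lra.
  rewrite Rmult_1_r. apply Rmult_le_reg_r with (W r s); auto.
  replace (exp 1 * (exp (- e * L r s a) * / W r s) * W r t * W r s) with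
    (exp (- e * L r s a) * (exp 1 * W r t)) by (field; lra). nra. Qed.

Lemma Y_diag k : (k < T)%nat -> Y k k <= exp 1 *
  (if Rlt_dec (INR (d (S k))) beta then loss (S k) (Ar r k) * loss (S k) (Ar r k) / Pr r k else 0).
Proof. intros Hk. destruct (hv k Hk) as [HA HP]. unfold Y, est.
  rewrite (sumR_ext _ _ (fun b => if (Ar r k =? b)%nat then Q r (k + d (S k)) b *
     (if Rlt_dec (INR (d (S k))) beta then loss (S k) b / Pr r k else 0) *
     (if Rlt_dec (INR (d (S k))) beta then loss (S k) b / Pr r k else 0) else 0)).
  rewrite sumR_single; auto. destruct (Rlt_dec _ _) as [Hd|Hd]; [|pose proof (exp_pos 1); lra].
  assert (Hr : Q r (k + d (S k)) (Ar r k) <= exp 1 * Q r k (Ar r k)).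
  { apply ratio; auto; try lia. replace (k + d (S k) - k)%nat with (d (S k)) by lia. auto. }
  rewrite <- HP in Hr. pose proof (P_pos k Hk).
  destruct (hloss (S k) (Ar r k) ltac:(lia) HA).
  set (q := Q r (k + d (S k)) (Ar r k)) in *. set (P := Pr r k) in *. set (l := loss (S k) (Ar r k)) in *.
  assert (Hq : q / P <= exp 1).
  { apply Rmult_le_reg_r with P; auto. unfold Rdiv. rewrite Rmult_assoc, Rinv_l; lra. }
  replace (q * (l / P) * (l / P)) with (q / P * (l * l / P)) by (field; lra).
  apply Rmult_le_compat_r; auto. unfold Rdiv. apply Rmult_le_pos; [nra|]. apply Rlt_le, Rinv_0_lt_compat; lra.
  intros b _. destruct (Ar r k =? b)%nat eqn:E; [|lra]. apply Nat.eqb_eq in E. subst. reflexivity. Qed.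

End Path.
Definition estf i a (x : nat * R) :=
  if (fst x =? a)%nat then (if Rlt_dec (INR (d (S i))) beta then loss (S i) a / snd x else 0) else 0.

Lemma est_estf r i a : est r i a = estf i a (nth i r (O,1)).
Proof. reflexivity. Qed.

Lemma Ex_len n : forall r F G, (forall t, length t = n -> F (r ++ t) = G (r ++ t)) -> Ex n F r = Ex n G r.
Proof. apply Ex_ext. Qed.

Lemma EX1 i f : (i < T)%nat ->
  Ex T (fun r => f (nth i r (O,1))) nil = Ex i (fun r1 => sumR K (fun b => pr r1 b * f (b, pr r1 b))) nil.
Proof. intros Hi. replace T with (i + S (T - S i))%nat by lia. rewrite Ex_split.
  apply Ex_ext. intros t Ht. simpl app.
  transitivity (Ex (S (T - S i)) (fun r => f (nth (length t) r (O,1)) * (fun _ => 1) r) t).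
  { apply Ex_ext; intros u _. rewrite Ht. lra. }
  rewrite Ex_step with (z := (O,1)). rewrite Ex_const; lra.
  intros; rewrite !Ex_const; auto. Qed.

Lemma c_est r i a : (a < K)%nat -> sumR K (fun b => pr r b * estf i a (b, pr r b)) = okR i * loss (S i) a.
Proof. intros Ha. unfold estf. simpl fst; simpl snd.
  rewrite (sumR_ext _ _ (fun b => if (a =? b)%nat then pr r b *
     (if Rlt_dec (INR (d (S i))) beta then loss (S i) b / pr r b else 0) else 0)).
  rewrite sumR_single; auto. unfold okR. destruct (Rlt_dec _ _); [|lra].
  field. apply Rgt_not_eq, pr_pos.
  intros b _. destruct (Nat.eq_dec a b).
  subst; rewrite Nat.eqb_refl; auto.
  replace (a =? b)%nat with false by (symmetry; apply Nat.eqb_neq; auto).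
  replace (b =? a)%nat with false by (symmetry; apply Nat.eqb_neq; auto). ring. Qed.

Lemma E_est i a : (i < T)%nat -> (a < K)%nat ->
  Ex T (fun r => est r i a) nil = okR i * loss (S i) a.
Proof. intros Hi Ha. rewrite (Ex_ext T nil _ (fun r => estf i a (nth i r (O,1)))) by auto.
  rewrite EX1; auto. rewrite (Ex_ext i nil _ (fun _ => okR i * loss (S i) a)).
  apply Ex_const. intros t _; apply c_est; auto. Qed.

Definition gdiag k (x : nat * R) :=
  if Rlt_dec (INR (d (S k))) beta then loss (S k) (fst x) * loss (S k) (fst x) / snd x else 0.

Lemma E_gdiag k : (k < T)%nat -> Ex T (fun r => gdiag k (nth k r (O,1))) nil <= INR K * okR k.
Proof. intros Hk. rewrite EX1; auto. rewrite <- (Ex_const k nil (INR K * okR k)).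
  apply Ex_mono; intros t _ _. simpl app. unfold gdiag, okR; simpl fst; simpl snd.
  destruct (Rlt_dec _ _).
  - replace (INR K * 1) with (sumR K (fun _ => 1)) by (rewrite sumR_const; ring). apply sumR_le; intros b Hb.
    pose proof (pr_pos t b). destruct (hloss (S k) b ltac:(lia) Hb).
    replace (pr t b * (loss (S k) b * loss (S k) b / pr t b)) with (loss (S k) b * loss (S k) b) by (field; lra).
    nra.
  - rewrite (sumR_ext _ _ (fun _ => 0)) by (intros; ring). rewrite sumR_const; lra. Qed.

Lemma EX2 j1 j2 L0 (f1 f2 : nat * R -> R) G z :
  (j1 < j2)%nat -> (j2 < L0)%nat -> (L0 <= T)%nat ->
  (L0 <= S j1 + d (S j1))%nat -> (L0 <= S j2 + d (S j2))%nat ->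
  (forall s1 s2, Rj j1 s1 s2 -> G s1 = G s2) -> (forall s1 s2, Rj j2 s1 s2 -> G s1 = G s2) ->
  (forall r t, length r = L0 -> length t = (T - L0)%nat -> G (r ++ t) = G r) ->
  Ex T (fun r => f1 (nth j1 r (O,1)) * (f2 (nth j2 r (O,1)) * G r)) nil =
  Ex j1 (fun r1 => sumR K (fun b => pr r1 b * f1 (b, pr r1 b)) *
    Ex (j2 - S j1) (fun r2 => sumR K (fun b => pr r2 b * f2 (b, pr r2 b)) *
      Ex (L0 - S j2) G (r2 ++ z :: nil)) (r1 ++ z :: nil)) nil.
Proof. intros H12 H2L HLT HL1 HL2 HG1 HG2 HGp.
  set (F := fun r => f1 (nth j1 r (O,1)) * (f2 (nth j2 r (O,1)) * G r)).
  replace (Ex T F nil) with (Ex (L0 + (T - L0)) F nil) by (f_equal; lia).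
  rewrite Ex_split. rewrite (Ex_ext L0 nil _ F).
  2:{ intros t Ht. simpl app. apply Ex_prefix. intros u Hu. unfold F.
      rewrite !nth_app_l by lia. rewrite HGp; auto. }
  replace (Ex L0 F nil) with (Ex (j1 + S (L0 - S j1)) F nil) by (f_equal; lia).
  rewrite Ex_split. apply Ex_ext. intros t Ht. simpl app.
  etransitivity.
  { apply (Ex_step_inv j1 (L0 - S j1) t f1 (fun r => f2 (nth j2 r (O,1)) * G r) z); auto.
    intros s1 s2 HR. destruct HR as [Hl Hn] eqn:HRR. rewrite Hn by lia. f_equal. apply HG1. split; auto.
    lia. }
  f_equal.
  replace (L0 - S j1)%nat with ((j2 - S j1) + S (L0 - S j2))%nat by lia.
  rewrite Ex_split. apply Ex_ext. intros u Hu.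
  apply (Ex_step_inv j2 (L0 - S j2) _ f2 G z); auto.
  rewrite !length_app; simpl; lia. lia. Qed.

Lemma sum_Ex1 n r (F : nat -> list (nat * R) -> R) :
  (forall x, sumR K (fun b => F b x) = 1) -> sumR K (fun b => Ex n (F b) r) = 1.
Proof. intros H. rewrite <- (Ex_sum n r K F).
  rewrite (Ex_ext _ _ _ (fun _ => 1)); [apply Ex_const|intros; apply H]. Qed.

Lemma c_est_bounds r i b : (b < K)%nat ->
  0 <= sumR K (fun c => pr r c * estf i b (c, pr r c)) <= okR i.
Proof. intros Hb. rewrite c_est; auto. destruct (hloss (S i) b ltac:(lia) Hb).
  pose proof (okR_01 i). split; nra. Qed.

Lemma E_pair j1 j2 c b : (b < K)%nat -> (j1 < j2)%nat -> (j2 <= c)%nat -> (j2 < T)%nat ->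
  (c < S j1 + d (S j1))%nat -> (c < S j2 + d (S j2))%nat ->
  Ex T (fun r => estf j1 b (nth j1 r (O,1)) * (estf j2 b (nth j2 r (O,1)) * Q r c b)) nil <=
  okR j1 * okR j2 * Ex j1 (fun r1 => Ex (j2 - S j1) (fun r2 =>
     Ex (Nat.min (S c) T - S j2) (fun r => Q r c b) (r2 ++ (O,1) :: nil)) (r1 ++ (O,1) :: nil)) nil.
Proof. intros Hb H12 H2c H2T Hc1 Hc2.
  rewrite (EX2 j1 j2 (Nat.min (S c) T) _ _ _ (O,1)); try lia.
  - rewrite <- Ex_scal. apply Ex_mono; intros t _ _.
    pose proof (c_est_bounds (nil ++ t) j1 b Hb).
    assert (0 <= Ex (j2 - S j1) (fun r2 => sumR K (fun b0 => pr r2 b0 * estf j2 b (b0, pr r2 b0)) *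
       Ex (Nat.min (S c) T - S j2) (fun r => Q r c b) (r2 ++ (O, 1) :: nil)) ((nil ++ t) ++ (O, 1) :: nil)).
    { apply Ex_nonneg; intros x. apply Rmult_le_pos. apply (c_est_bounds x j2 b Hb).
      apply Ex_nonneg; intros; apply Rlt_le, Q_pos. }
    assert (Hin : Ex (j2 - S j1) (fun r2 => sumR K (fun b0 => pr r2 b0 * estf j2 b (b0, pr r2 b0)) *
       Ex (Nat.min (S c) T - S j2) (fun r => Q r c b) (r2 ++ (O, 1) :: nil)) ((nil ++ t) ++ (O, 1) :: nil)
       <= okR j2 * Ex (j2 - S j1) (fun r2 => Ex (Nat.min (S c) T - S j2) (fun r => Q r c b) (r2 ++ (O, 1) :: nil)) ((nil ++ t) ++ (O, 1) :: nil)).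
    { rewrite <- Ex_scal. apply Ex_mono; intros u _ _.
      pose proof (c_est_bounds (((nil ++ t) ++ (O, 1) :: nil) ++ u) j2 b Hb).
      assert (0 <= Ex (Nat.min (S c) T - S j2) (fun r => Q r c b) ((((nil ++ t) ++ (O, 1) :: nil) ++ u) ++ (O, 1) :: nil))
        by (apply Ex_nonneg; intros; apply Rlt_le, Q_pos).
      nra. }
    pose proof (okR_01 j1). pose proof (okR_01 j2).
    assert (0 <= Ex (j2 - S j1) (fun r2 => Ex (Nat.min (S c) T - S j2) (fun r => Q r c b) (r2 ++ (O, 1) :: nil)) ((nil ++ t) ++ (O, 1) :: nil))
      by (apply Ex_nonneg; intros; apply Ex_nonneg; intros; apply Rlt_le, Q_pos).
    nra.
  - intros s1 s2 HR. apply (Q_Rj j1); auto.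
  - intros s1 s2 HR. apply (Q_Rj j2); auto.
  - intros r t Hr Ht. destruct (Nat.le_gt_cases (S c) T).
    + apply Q_app. lia.
    + rewrite Nat.min_r in Ht by lia. rewrite Nat.sub_diag in Ht. destruct t; [|simpl in Ht; lia]. rewrite app_nil_r; auto. Qed.

Lemma E_Y_off k j : (k < T)%nat -> (j < T)%nat -> k <> j -> (k <= j + d (S j))%nat ->
  (j + d (S j) < S k + d (S k))%nat -> Ex T (fun r => Y r k j) nil <= okR k * okR j.
Proof. intros Hk Hj Hkj H1 H2. unfold Y.
  rewrite Ex_sum.
  set (c := (j + d (S j))%nat) in *.
  destruct (Nat.lt_total k j) as [Hlt|[Heq|Hlt]]; [| lia |].
  - eapply Rle_trans. apply sumR_le. intros b Hb.
    rewrite (Ex_ext T nil _ (fun r => estf k b (nth k r (O,1)) * (estf j b (nth j r (O,1)) * Q r c b))).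
    apply (E_pair k j c b); auto; unfold c; lia.
    intros t _. rewrite !est_estf. ring.
    rewrite sumR_scal. rewrite (sum_Ex1 k nil (fun b r1 => Ex (j - S k) (fun r2 =>
     Ex (Nat.min (S c) T - S j) (fun r => Q r c b) (r2 ++ (O,1) :: nil)) (r1 ++ (O,1) :: nil))). lra.
    intros x. apply sum_Ex1. intros y. apply sum_Ex1. intros; apply Q_sum.
  - eapply Rle_trans. apply sumR_le. intros b Hb.
    rewrite (Ex_ext T nil _ (fun r => estf j b (nth j r (O,1)) * (estf k b (nth k r (O,1)) * Q r c b))).
    apply (E_pair j k c b); auto; unfold c in *; lia.
    intros t _. rewrite !est_estf. ring.
    rewrite sumR_scal. rewrite (sum_Ex1 j nil (fun b r1 => Ex (k - S j) (fun r2 =>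
     Ex (Nat.min (S c) T - S k) (fun r => Q r c b) (r2 ++ (O,1) :: nil)) (r1 ++ (O,1) :: nil))). lra.
    intros x. apply sum_Ex1. intros y. apply sum_Ex1. intros; apply Q_sum. Qed.

Definition hh k j := if (k =? j)%nat then 0 else cc k j * (okR k * okR j).
Definition gg k j := okR k * (if ((k <? j) && (j <=? k + d (S k)))%nat%bool then 1 else 0).

Lemma hh_gg k j : hh k j + hh j k <= gg k j + gg j k.
Proof. unfold hh, gg, cc, okR.
  destruct (Rlt_dec (INR (d (S k))) beta); destruct (Rlt_dec (INR (d (S j))) beta);
  repeat match goal with |- context [if ?b then _ else _] =>
    match b with
    | Rlt_dec _ _ => fail 1
    | _ => destruct b eqn:?
    end end; bool2prop; try lra; try (exfalso; lia). Qed.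

Lemma offdiag_count : sumR T (fun k => sumR T (fun j => hh k j)) <= D_beta T d beta.
Proof.
  assert (H2 : 2 * sumR T (fun k => sumR T (fun j => hh k j)) <= 2 * sumR T (fun k => sumR T (fun j => gg k j))).
  { replace (2 * sumR T (fun k => sumR T (fun j => hh k j))) with
     (sumR T (fun k => sumR T (fun j => hh k j)) + sumR T (fun k => sumR T (fun j => hh j k))).
    replace (2 * sumR T (fun k => sumR T (fun j => gg k j))) with
     (sumR T (fun k => sumR T (fun j => gg k j)) + sumR T (fun k => sumR T (fun j => gg j k))).
    rewrite <- !sumR_plus. apply sumR_le; intros k _. rewrite <- !sumR_plus. apply sumR_le; intros j _. apply hh_gg.
    rewrite (sumR_swap T T (fun k j => gg j k)). lra.
    rewrite (sumR_swap T T (fun k j => hh j k)). lra. }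
  assert (Hg : sumR T (fun k => sumR T (fun j => gg k j)) <= D_beta T d beta).
  { unfold D_beta. apply sumR_le; intros k _. unfold gg. rewrite sumR_scal.
    pose proof (count_win T k (d (S k))).
    assert (INR (Nat.min (d (S k)) (T - S k)) <= INR (d (S k))) by (apply le_INR; lia).
    unfold okR. destruct (Rlt_dec _ _); lra. }
  lra. Qed.

Fixpoint maxd n := match n with O => O | S n' => Nat.max (maxd n') (d (S n')) end.
Lemma maxd_spec n i : (i < n)%nat -> (d (S i) <= maxd n)%nat.
Proof. induction n; intros H; simpl; [lia|]. destruct (Nat.eq_dec i n). subst; lia.
  specialize (IHn ltac:(lia)); lia. Qed.

Lemma E_ccY k j : (k < T)%nat -> (j < T)%nat ->
  cc k j * Ex T (fun r => Y r k j) nil <=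
  (if (k =? j)%nat then / 2 * (exp 1 * (INR K * okR k)) else 0) + hh k j.
Proof. intros Hk Hj. destruct (Nat.eq_dec k j) as [E|E].
  - subst j. rewrite Nat.eqb_refl. unfold hh. rewrite Nat.eqb_refl, Rplus_0_r.
    assert (Hc : cc k k = / 2).
    { unfold cc. replace ((k <=? k + d (S k)) && (k + d (S k) <? k + d (S k)))%nat%bool with false.
      rewrite Nat.eqb_refl; lra. symmetry; apply andb_false_iff; right; apply Nat.ltb_ge; lia. }
    rewrite Hc. apply Rmult_le_compat_l; [lra|].
    eapply Rle_trans.
    + apply (Ex_mono T nil _ (fun r => exp 1 * gdiag k (nth k r (O,1)))).
      intros t Ht Hv. simpl app.
      apply Y_diag; auto. intros i Hi. pose proof (valid_props t nil Hv i) as HH. simpl in HH.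
      apply HH. lia.
    + rewrite Ex_scal. apply Rmult_le_compat_l; [apply Rlt_le, exp_pos|]. apply E_gdiag; auto.
  - replace (k =? j)%nat with false by (symmetry; apply Nat.eqb_neq; auto). rewrite Rplus_0_l.
    unfold hh. replace (k =? j)%nat with false by (symmetry; apply Nat.eqb_neq; auto).
    assert (HY0 : 0 <= Ex T (fun r => Y r k j) nil).
    { unfold Y. rewrite Ex_sum. apply sumR_nonneg; intros b Hb. rewrite <- (Ex_const T nil 0).
      apply Ex_mono; intros t Ht Hv. simpl app.
      assert (hv' : forall i, (i < T)%nat -> (Ar t i < K)%nat /\ Pr t i = Q t i (Ar t i)).
      { intros i Hi. pose proof (valid_props t nil Hv i) as HH. simpl in HH. apply HH. lia. }
      pose proof (est_nonneg t Ht hv' k b Hk). pose proof (est_nonneg t Ht hv' j b Hj).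
      pose proof (Q_pos t (j + d (S j)) b). 
      apply Rmult_le_pos; [apply Rmult_le_pos|]; lra. }
    pose proof (okR_01 k). pose proof (okR_01 j).
    unfold cc.
    destruct ((k <=? j + d (S j)) && (j + d (S j) <? k + d (S k)))%nat%bool eqn:E1;
    destruct (k + d (S k) =? j + d (S j))%nat eqn:E2; bool2prop.
    + lia.
    + pose proof (E_Y_off k j Hk Hj E ltac:(lia) ltac:(lia)). nra.
    + pose proof (E_Y_off k j Hk Hj E ltac:(lia) ltac:(lia)). nra.
    + pose proof (E_Y_off k j Hk Hj E ltac:(lia) ltac:(lia)). nra.
    + lra.
    + lra. Qed.

Lemma main_bound a : (a < K)%nat ->
  exp_loss K loss d eta beta T nil <= card_S T d beta + ln (INR K) / e + sumR T (fun k => loss (S k) a)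
    + e * (INR K * INR T * exp 1 / 2 + D_beta T d beta).
Proof. intros Ha. set (M := (T + maxd T)%nat).
  assert (HM : forall k, (k < T)%nat -> (k + d (S k) < M)%nat).
  { intros k Hk. pose proof (maxd_spec T k Hk). unfold M; lia. }
  rewrite exp_loss_Ex.
  eapply Rle_trans.
  { apply (Ex_mono T nil _ (fun r => (card_S T d beta + ln (INR K) / e + L r M a) +
        e * sumR T (fun k => sumR T (fun j => cc k j * Y r k j)))).
    intros t Ht Hv. simpl app.
    assert (hv' : forall i, (i < T)%nat -> (Ar t i < K)%nat /\ Pr t i = Q t i (Ar t i)).
    { intros i Hi. pose proof (valid_props t nil Hv i) as HH. simpl in HH. apply HH. lia. }
    pose proof (pathwise t Ht hv' M a HM Ha).
    assert (sumR T (fun k => loss (S (length (@nil (nat * R)) + k)) (Ar t (length (@nil (nat*R)) + k)))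
       <= card_S T d beta + sumR T (fun k => okR k * loss (S k) (Ar t k))).
    { unfold card_S. rewrite <- sumR_plus. apply sumR_le; intros k Hk. simpl length; simpl Nat.add.
      destruct (hv' k Hk) as [HA _]. destruct (hloss (S k) (Ar t k) ltac:(lia) HA).
      unfold okR. destruct (Rlt_dec _ _); destruct (Rle_dec _ _); lra. }
    lra. }
  rewrite (Ex_plus T nil (fun r => card_S T d beta + ln (INR K) / e + L r M a)
     (fun r => e * sumR T (fun k => sumR T (fun j => cc k j * Y r k j)))).
  rewrite (Ex_plus T nil (fun r => card_S T d beta + ln (INR K) / e) (fun r => L r M a)).
  rewrite Ex_const, Ex_scal.
  assert (HL : Ex T (fun r => L r M a) nil <= sumR T (fun k => loss (S k) a)).
  { rewrite (Ex_ext T nil _ (fun r => sumR T (fun i => est r i a))).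
    rewrite Ex_sum. apply sumR_le; intros i Hi. rewrite E_est; auto.
    destruct (hloss (S i) a ltac:(lia) Ha). pose proof (okR_01 i). nra.
    intros t Ht. simpl app. unfold L. rewrite Ht. apply sumR_ext; intros i Hi.
    replace (S i + d (S i) <=? M)%nat with true; auto. symmetry; apply Nat.leb_le. specialize (HM i Hi); lia. }
  assert (HY : Ex T (fun r => sumR T (fun k => sumR T (fun j => cc k j * Y r k j))) nil <=
     INR K * INR T * exp 1 / 2 + D_beta T d beta).
  { rewrite Ex_sum. eapply Rle_trans.
    - apply sumR_le; intros k Hk. rewrite Ex_sum. apply sumR_le; intros j Hj. rewrite Ex_scal.
      apply E_ccY; auto.
    - rewrite (sumR_ext T _ (fun k => sumR T (fun j => if (k =? j)%nat then / 2 * (exp 1 * (INR K * okR j)) else 0)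
          + sumR T (fun j => hh k j))).
      2:{ intros k _. rewrite <- sumR_plus. apply sumR_ext; intros j _. destruct (k =? j)%nat eqn:E; auto.
          apply Nat.eqb_eq in E; subst; auto. }
      rewrite sumR_plus. pose proof offdiag_count.
      rewrite (sumR_ext T _ (fun k => / 2 * (exp 1 * (INR K * okR k)))).
      2:{ intros k Hk. apply (sumR_single T k (fun j => / 2 * (exp 1 * (INR K * okR j))) Hk). }
      assert (sumR T (fun k => / 2 * (exp 1 * (INR K * okR k))) <= sumR T (fun k => / 2 * (exp 1 * INR K))).
      { apply sumR_le; intros k _. pose proof (okR_01 k). pose proof (exp_pos 1).
        assert (0 <= INR K) by apply pos_INR.
        assert (0 <= exp 1 * INR K) by nra.
        pose proof (Rmult_le_compat_l (exp 1 * INR K) (okR k) 1 H3 (proj2 H0)). nra. }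
      rewrite sumR_const in H0. lra. }
  pose proof e_pos. nra. Qed.

End Main.

Lemma minR_attain n f : exists a, (a <= n)%nat /\ minR n f = f a.
Proof. induction n; simpl. exists O; split; auto.
  destruct IHn as [a [Ha Hm]]. unfold Rmin. destruct (Rle_dec (minR n f) (f (S n))).
  exists a; split; auto. exists (S n); split; auto. Qed.

Theorem theorem3 (K T : nat) (loss : nat -> nat -> R) (d : nat -> nat)
  (eta beta : R)
  (hK : (2 <= K)%nat) (hT : (1 <= T)%nat)
  (hloss : forall t a, (1 <= t)%nat -> (a < K)%nat -> 0 <= loss t a <= 1)
  (heta : 0 < eta) (hbeta : 0 < beta) :
  skipper_dew_regret K T loss d eta beta
  <= card_S T d beta
     + Rmax (ln (INR K) / eta) (4 * exp 1 * beta * ln (INR K))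
     + eta * (INR K * INR T * exp 1 / 2 + D_beta T d beta).
Proof.
  destruct (minR_attain (K - 1) (fun a => sumR T (fun i => loss (S i) a))) as [a [Ha Hm]].
  pose proof (main_bound K T loss d eta beta hK hloss heta hbeta a ltac:(lia)) as Hb.
  unfold skipper_dew_regret. rewrite Hm.
  assert (HlnK : 0 <= ln (INR K)).
  { rewrite <- ln_1. apply ln_mono; [lra|]. replace 1 with (INR 1) by reflexivity. apply le_INR; lia. }
  assert (He : ln (INR K) / e eta beta <= Rmax (ln (INR K) / eta) (4 * exp 1 * beta * ln (INR K))).
  { unfold e, eta', Rmin. destruct (Rle_dec eta (/ (4 * exp 1 * beta))).
    - apply Rmax_l.
    - eapply Rle_trans; [|apply Rmax_r]. right. unfold Rdiv. rewrite Rinv_inv. ring. }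
  assert (HX : 0 <= INR K * INR T * exp 1 / 2 + D_beta T d beta).
  { assert (0 <= D_beta T d beta).
    { unfold D_beta. apply sumR_nonneg; intros. destruct (Rlt_dec _ _); [apply pos_INR|lra]. }
    pose proof (pos_INR K). pose proof (pos_INR T). pose proof (exp_pos 1).
    assert (0 <= INR K * INR T) by nra. assert (0 <= INR K * INR T * exp 1) by nra. lra. }
  pose proof (e_le_eta eta beta) as Hle.
  assert (e eta beta * (INR K * INR T * exp 1 / 2 + D_beta T d beta) <= eta * (INR K * INR T * exp 1 / 2 + D_beta T d beta))
    by (apply Rmult_le_compat_r; auto).
  lra.
Qed.
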